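(* For $m,n\in\mathbb{N}$, let $$G_{m,n}=\sum_{k=0}^{n-1}\frac{1}{(2k+1)(2k+2)\cdots(2k+m)}.$$ Then $$G_{m,n}=\sum_{k=1}^n\frac{(-1)^{k-1}}{(m-1)!\,(m+k-1)}\binom{n}{k}\,{}_2F_1(1,1-k;m+k;-1).$$
   Context: $\mathbb{N}$ is the set of positive integers. For complex $a_1,\ldots,a_{s+1},b_1,\ldots,b_s$ with no $b_i$ zero or a negative integer, the generalized hypergeometric function is ${}_{s+1}F_s(a_1,\ldots,a_{s+1};b_1,\ldots,b_s;x)=\sum_{i\geq 0}\frac{(a_1)_i\cdots(a_{s+1})_i}{(b_1)_i\cdots(b_s)_i}\frac{x^i}{i!}$, where $(a)_0=1$ and $(a)_i=a(a+1)\cdots(a+i-1)$ for $i>0$. (When some $a_j$ is a nonpositive integer the series is a finite sum.) *)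

(* Defs.v *)
From mathcomp Require Import all_boot all_order all_algebra.
Set Implicit Arguments. Unset Strict Implicit. Unset Printing Implicit Defensive.
Import Order.TTheory GRing.Theory Num.Theory.
Local Open Scope ring_scope.

Definition poch (R : ringType) (a : R) (i : nat) : R :=
  \prod_(j < i) (a + j%:R).

Definition F21_term (R : fieldType) (a b c x : R) (i : nat) : R :=
  poch a i * poch b i / (poch c i * i`!%:R) * x ^+ i.

(* 2F1(a,b;c;x) in the terminating case where b = -N is a nonpositive
   integer: all terms with index i > N vanish since (-N)_i = 0, so the
   series is the finite sum of its terms of index 0..N. *)
Definition F21_term_neg (R : fieldType) (a : R) (N : nat) (c x : R) : R :=
  \sum_(i < N.+1) F21_term a (- N%:R) c x i.

Definition G (m n : nat) : rat :=
  \sum_(k < n) (poch ((2 * k).+1)%:R m)^-1.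

(* Main.v *)
Require Import Defs.
From mathcomp Require Import all_boot all_order all_algebra.
From mathcomp Require Import ring.
Import Order.TTheory GRing.Theory Num.Theory.
Local Open Scope ring_scope.

Definition Lf (p : {poly rat}) : rat := \sum_(i < size p) p`_i / (i.+1)%:R.

Lemma Lf_widen (p : {poly rat}) n : (size p <= n)%N -> Lf p = \sum_(i < n) p`_i / (i.+1)%:R.
Proof.
move=> hn; rewrite /Lf (big_ord_widen n (fun i => p`_i / (i.+1)%:R) hn).
rewrite big_mkcond /=; apply: eq_bigr => i _.
case: ifP => // /negbT; rewrite -leqNgt => hi.
by rewrite nth_default // mul0r.
Qed.

Lemma LfD (p q : {poly rat}) : Lf (p + q) = Lf p + Lf q.
Proof.
pose n := maxn (size p) (size q).
rewrite (@Lf_widen _ n) ?size_polyD //.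
rewrite (@Lf_widen p n) ?leq_maxl // (@Lf_widen q n) ?leq_maxr //.
by rewrite -big_split /=; apply: eq_bigr => i _; rewrite coefD mulrDl.
Qed.

Lemma LfZ (c : rat) (p : {poly rat}) : Lf (c *: p) = c * Lf p.
Proof.
rewrite (@Lf_widen _ (size p)) ?size_scale_leq // /Lf mulr_sumr.
by apply: eq_bigr => i _; rewrite coefZ mulrA.
Qed.

Lemma Lf0 : Lf 0 = 0.
Proof. by rewrite /Lf size_poly0 big_ord0. Qed.

Lemma LfN (p : {poly rat}) : Lf (- p) = - Lf p.
Proof. by rewrite -scaleN1r LfZ mulN1r. Qed.

Lemma LfMn (p : {poly rat}) n : Lf (p *+ n) = Lf p *+ n.
Proof. by elim: n => [|n IH]; rewrite ?mulr0n ?Lf0 // !mulrS LfD IH. Qed.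

Lemma Lf_sum n (F : nat -> {poly rat}) :
  Lf (\sum_(i < n) F i) = \sum_(i < n) Lf (F i).
Proof.
elim: n => [|n IH]; first by rewrite !big_ord0 Lf0.
by rewrite !big_ord_recr LfD IH.
Qed.

Lemma Lf_deriv (p : {poly rat}) : Lf p^`() = p.[1] - p.[0].
Proof.
have hs : (size p^`() <= size p)%N.
  have [->|pn0] := eqVneq p 0; first by rewrite deriv0.
  exact: ltnW (lt_size_deriv pn0).
rewrite (Lf_widen _ _ hs) horner_coef horner_coef0.
have -> : \sum_(i < size p) p^`()`_i / (i.+1)%:R = \sum_(i < size p) p`_i.+1.
  apply: eq_bigr => i _; rewrite coef_deriv -[_ *+ _]mulr_natr mulfK //.
  by rewrite pnatr_eq0.
have e1 : \sum_(i < (size p).+1) p`_i = p`_0 + \sum_(i < size p) p`_i.+1.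
  by rewrite big_ord_recl.
have e2 : \sum_(i < (size p).+1) p`_i = \sum_(i < size p) p`_i.
  by rewrite big_ord_recr /= (nth_default _ (leqnn _)) addr0.
have -> : \sum_(i < size p) p`_i * 1 ^+ i = \sum_(i < size p) p`_i.
  by apply: eq_bigr => i _; rewrite expr1n mulr1.
by rewrite -e2 e1 (addrC p`_0) addrK.
Qed.

Lemma Lf_parts (p q : {poly rat}) : Lf (p^`() * q) = (p*q).[1] - (p*q).[0] - Lf (p * q^`()).
Proof. by rewrite -Lf_deriv derivM LfD addrK. Qed.

Lemma Lf_Xn a : Lf 'X^a = (a.+1)%:R^-1.
Proof.
rewrite /Lf size_polyXn big_ord_recr /= coefXn eqxx big1 ?add0r ?mul1r //.
by move=> i _; rewrite coefXn (ltn_eqF (ltn_ord i)) mul0r.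
Qed.

Lemma natr_fact_neq0 n : (n`!%:R : rat) != 0.
Proof. by rewrite pnatr_eq0 -lt0n fact_gt0. Qed.

Lemma Lf_beta a b : Lf ('X^a * (1 - 'X)^+b) = (a`! * b`!)%:R / ((a + b).+1)`!%:R.
Proof.
elim: b a => [|b IH] a.
  rewrite expr0 mulr1 Lf_Xn addn0 fact0 muln1 factS natrM.
  have h1 := natr_fact_neq0 a.
  by field; rewrite h1 nat1r pnatr_eq0.
have H := Lf_parts ('X^(a.+1)) ((1 - 'X)^+b.+1).
rewrite derivXn mulrnAl LfMn deriv_exp derivB derivC derivX sub0r in H.
have z n : (0:rat) ^+ n.+1 = 0 by rewrite exprS mul0r.
rewrite !hornerE subrr !z mulr0 mul0r subrr sub0r in H.
rewrite mulN1r mulrnAr mulrN LfMn LfN mulNrn opprK IH in H.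
have ha : (a.+1%:R : rat) != 0 by rewrite pnatr_eq0.
apply: (mulIf ha); rewrite mulr_natr H -mulr_natr.
rewrite addSn addnS !factS !natrM.
have h1 := natr_fact_neq0 a.
have h2 := natr_fact_neq0 b.
have h3 := natr_fact_neq0 (a + b).
have h4 : ((a + b).+1%:R : rat) != 0 by rewrite pnatr_eq0.
have h5 : ((a + b).+2%:R : rat) != 0 by rewrite pnatr_eq0.
rewrite -mulr_natr.
by field; rewrite h3 -!natrD nat1r !pnatr_eq0.
Qed.

Definition e K M i : rat := (K ^_ i)%:R * M`!%:R / (M + i)`!%:R.
Definition E K M : rat := \sum_(i < K.+1) e K M i.

Lemma E_rec K M : E K.+1 M.+1 = 1 + K.+1%:R / M.+2%:R * E K M.+2.
Proof.
rewrite /E big_ord_recl mulr_sumr.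
congr (_ + _).
  rewrite /e ffactn0 addn0 mul1r divff //; exact: natr_fact_neq0.
apply: eq_bigr => i _; rewrite /e lift0 -addSnnS.
move: (natr_fact_neq0 (M.+2 + i)); move: ((M.+2 + i)`!%:R) => F hF.
rewrite ffactSS (natrM _ K.+1) (factS M.+1) (natrM _ M.+2).
move: (natr_fact_neq0 M.+1); move: ((M.+1)`!%:R) => F1 hF1.
have h2 : (M.+2%:R : rat) != 0 by rewrite pnatr_eq0.
by field; rewrite hF -natrD pnatr_eq0.
Qed.

Opaque Lf.
Lemma Lf_E K M : Lf ((1 - 'X)^+M * (1 + 'X)^+K) = E K M.+1 / M.+1%:R.
Proof.
elim: K M => [|K IH] M.
  rewrite expr0 mulr1 -[(1 - 'X)^+M]mul1r -(expr0 'X) Lf_beta add0n fact0 mul1n.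
  rewrite /E big_ord1 /e ffactn0 addn0 mul1r divff ?mul1r; last exact: natr_fact_neq0.
  rewrite factS natrM; move: (natr_fact_neq0 M); move: (M`!%:R) => F hF.
  have h2 : (M.+1%:R : rat) != 0 by rewrite pnatr_eq0.
  by field; rewrite hF nat1r pnatr_eq0.
have H := Lf_parts ((1 - 'X)^+M.+1) ((1 + 'X)^+K.+1).
rewrite !deriv_exp derivB derivD derivC derivX sub0r add0r in H.
have z n : (0:rat) ^+ n.+1 = 0 by rewrite exprS mul0r.
rewrite !hornerE subrr !z mul0r !expr1n mulr1 sub0r in H.
rewrite mulN1r mulrnAl mulrnAr !LfMn mulNr LfN IH in H.
have hM : (M.+1%:R : rat) != 0 by rewrite pnatr_eq0.
have H2 : Lf ((1 - 'X) ^+ M * (1 + 'X) ^+ K.+1) *+ M.+1 = 1 + E K M.+2 / M.+2%:R *+ K.+1.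
  rewrite !succnK in H.
  apply: oppr_inj; rewrite opprD -mulNrn. exact: H.
apply: (mulIf hM); rewrite mulr_natr H2 E_rec -[_ *+ K.+1]mulr_natr.
move: (E K M.+2) => e0.
have hM2 : (M.+2%:R : rat) != 0 by rewrite pnatr_eq0.
by field; rewrite ?nat1r -?natrD !pnatr_eq0.
Qed.

Lemma pochS (a : rat) i : poch a i.+1 = poch a i * (a + i%:R).
Proof. by rewrite /poch big_ord_recr. Qed.

Lemma poch1 i : poch (1:rat) i = i`!%:R.
Proof.
elim: i => [|i IH]; first by rewrite /poch big_ord0.
by rewrite pochS IH nat1r factS natrM mulrC.
Qed.

Lemma pochN K i : poch (- (K%:R) : rat) i * (-1)^+i = (K ^_ i)%:R.
Proof.
elim: i => [|i IH]; first by rewrite /poch big_ord0 expr0 mulr1 ffactn0.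
have -> : poch (- K%:R : rat) i.+1 * (-1) ^+ i.+1 = (poch (- K%:R : rat) i * (-1)^+i) * (K%:R - i%:R).
  by rewrite pochS exprS; ring.
rewrite IH ffactnSr natrM.
case: (leqP i K) => h; first by rewrite natrB.
by rewrite ffact_small // !mul0r.
Qed.

Lemma pochM M i : poch (M.+1%:R : rat) i * M`!%:R = (M + i)`!%:R.
Proof.
elim: i => [|i IH]; first by rewrite /poch big_ord0 mul1r addn0.
rewrite pochS addnS factS natrM -IH -natrD addSn.
move: (poch _ _) (M`!%:R) => x y; ring.
Qed.

Lemma F21_E K M : F21_term_neg (1:rat) K (M.+1)%:R (-1) = E K M.
Proof.
rewrite /F21_term_neg /E; apply: eq_bigr => i _; rewrite /F21_term /e poch1.
have hc : poch (M.+1%:R : rat) i = (M+i)`!%:R / M`!%:R.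
  by rewrite -pochM mulfK // natr_fact_neq0.
have hN : poch (- K%:R : rat) i = (K^_i)%:R * (-1)^+i.
  by rewrite -pochN -mulrA -exprMn mulrNN mulr1 expr1n mulr1.
have hs : (-1)^+i * (-1)^+i = 1 :> rat by rewrite -exprMn mulrNN mulr1 expr1n.
rewrite hc hN.
move: (natr_fact_neq0 (M + i)) (natr_fact_neq0 M) (natr_fact_neq0 i).
move: ((M + i)`!%:R) (M`!%:R) (i`!%:R) ((K ^_ i)%:R) hs => A B C D hs hA hB hC.
move: ((-1) ^+ i) hs => s hs.
have -> : C * (D * s) / (A / B * C) * s = C * D / (A / B * C) * (s * s) by ring.
by rewrite hs; field; rewrite hA hB hC.
Qed.

Lemma geom (R : comNzRingType) (Z : R) n :
  \sum_(j < n) (1 + Z)^+j = \sum_(K < n) Z^+K *+ 'C(n, K.+1).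
Proof.
elim: n => [|n IH]; first by rewrite !big_ord0.
rewrite big_ord_recr /= IH [1 + Z]addrC exprD1n.
have -> : \sum_(K < n.+1) Z ^+ K *+ 'C(n.+1, K.+1) =
   \sum_(K < n.+1) Z ^+ K *+ 'C(n, K.+1) + \sum_(K < n.+1) Z ^+ K *+ 'C(n, K).
  by rewrite -big_split /=; apply: eq_bigr => K _; rewrite binS mulrnDr.
by rewrite [X in _ = X + _]big_ord_recr /= bin_small // mulr0n addr0.
Qed.

Lemma poly_id m' n :
  \sum_(k < n) 'X^(2 * k) * (1 - 'X)^+m' =
  \sum_(K < n) (((-1)^+K * 'C(n, K.+1)%:R) *: ((1 - 'X)^+(m' + K) * (1 + 'X)^+K) : {poly rat}).
Proof.
pose Z : {poly rat} := 'X^2 - 1.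
have hZ : Z = - ((1 - 'X) * (1 + 'X)) by rewrite /Z; ring.
have -> : \sum_(k < n) 'X^(2 * k) * (1 - 'X)^+m' = \sum_(k < n) (1 + Z)^+k * (1 - 'X)^+m'.
  have -> : 1 + Z = 'X^2 by rewrite /Z; ring.
  by apply: eq_bigr => k _; rewrite exprM.
rewrite -mulr_suml geom mulr_suml; apply: eq_bigr => K _.
rewrite hZ (exprNn ((1 - 'X) * (1 + 'X))) exprMn exprD -mul_polyC rmorphM /= rmorphXn rmorphN1 polyC_natr -mulr_natr.
move: ((1 - 'X)^+K) ((1 + 'X)^+K) ((1 - 'X)^+m') => a b c; ring.
Qed.

Theorem proposition3p5 (m n : nat) (hm : (0 < m)%N) (hn : (0 < n)%N) :
  G m n =
  \sum_(1 <= k < n.+1)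
     ((-1) ^+ k.-1 / ((m.-1)`!%:R * (m + k).-1%:R) * 'C(n, k)%:R
       * F21_term_neg (1 : rat) k.-1 (m + k)%:R (-1)).
Proof.
case: m hm => // m' _.
have hf := natr_fact_neq0 m'.
have -> : G m'.+1 n = (m'`!%:R)^-1 * Lf (\sum_(k < n) 'X^(2 * k) * (1 - 'X)^+m').
  rewrite (big_morph Lf LfD Lf0) mulr_sumr /G; apply: eq_bigr => k _.
  rewrite Lf_beta.
  have hp := pochM (2 * k) m'.+1.
  rewrite addnS in hp.
  have hk := natr_fact_neq0 (2 * k).
  have -> : poch ((2 * k).+1%:R : rat) m'.+1 = (2 * k + m').+1`!%:R / (2 * k)`!%:R.
    by rewrite -hp mulfK.
  move: ((2 * k + m').+1`!%:R) (natr_fact_neq0 (2 * k + m').+1) => A hA.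
  rewrite natrM.
  move: ((2 * k)`!%:R) (m'`!%:R) hk hf => B C hB hC.
  by field; rewrite hA hB hC.
rewrite poly_id (big_morph Lf LfD Lf0) mulr_sumr big_add1 /= big_mkord.
apply: eq_bigr => K _.
rewrite LfZ Lf_E addSn addnS /= F21_E.
move: (E K (m' + K).+1) => e0.
have hK : ((m' + K).+1%:R : rat) != 0 by rewrite pnatr_eq0.
move: (m'`!%:R) hf => C hC.
by field; rewrite hC -natrD nat1r pnatr_eq0.
Qed.
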